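(* Let $A,B\in\mathfrak{su}(2)$ satisfy $\operatorname{tr}(AB)=0$, and put $g:=\exp(A)$ and $h:=\exp(B)$. Then \[ gh=hg+h^{-1}g+hg^{-1}-\operatorname{tr}(hg)\,, \] where the scalar $\operatorname{tr}(hg)$ is understood as $\operatorname{tr}(hg)$ times the $2\times 2$ identity matrix.
   Context: $\mathfrak{su}(2)$ denotes the Lie algebra of traceless anti-Hermitian $2\times 2$ complex matrices, $\exp$ is the matrix exponential, and $\operatorname{tr}$ is the ordinary matrix trace. *)

(* Defs.v *)
From HB Require Import structures.
From mathcomp Require Import all_boot all_order all_algebra.
From mathcomp Require Export complex.
From mathcomp Require Import all_classical all_reals all_analysis.
Set Implicit Arguments. Unset Strict Implicit. Unset Printing Implicit Defensive.
Import Order.TTheory GRing.Theory Num.Theory.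
Import numFieldNormedType.Exports.
Local Open Scope ring_scope.
Local Open Scope complex_scope.

Definition adjmx (R : rcfType) (n : nat) (A : 'M[R[i]]_n) : 'M[R[i]]_n :=
  map_mx (fun z => z^*) A^T.

Definition su2 (R : rcfType) (A : 'M[R[i]]_2) : Prop :=
  adjmx A = - A /\ \tr A = 0.

Definition expmx (R : realType) (A : 'M[R[i]]_2) : 'M[R[i]]_2 :=
  limn (series (fun k : nat => (k`!%:R)^-1 *: A ^+ k)).

(* Main.v *)
Require Import Defs.
From HB Require Import structures.
From mathcomp Require Import all_boot all_order all_algebra.
From mathcomp Require Import complex.
From mathcomp Require Import all_classical all_reals all_analysis.
From mathcomp Require Import ring lra.
Import Order.TTheory GRing.Theory Num.Theory.
Import numFieldNormedType.Exports.
Local Open Scope ring_scope.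

Lemma o1 : lift (0 : 'I_2) (0 : 'I_1) = 1. Proof. exact/val_inj. Qed.
Lemma o2 : lift ord0 (ord0 : 'I_1) = 1 :> 'I_2. Proof. exact/val_inj. Qed.
Lemma o3 : ord0 = 0 :> 'I_2. Proof. exact/val_inj. Qed.
Lemma o4 : lift (1 : 'I_2) (0 : 'I_1) = 0. Proof. exact/val_inj. Qed.
Lemma o5 : (0 == 1 :> 'I_2) = false. Proof. by []. Qed.
Lemma o6 : (1 == 0 :> 'I_2) = false. Proof. by []. Qed.
Lemma ord2 (i : 'I_2) : i = 0 \/ i = 1.
Proof. case: i => [[|[|//]]] Hi; [left|right]; exact/val_inj. Qed.

Lemma det2 (F : fieldType) (A : 'M[F]_2) : \det A = A 0 0 * A 1 1 - A 0 1 * A 1 0.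
Proof.
rewrite (expand_det_row _ 0) !big_ord_recl big_ord0 /cofactor !det_mx11 /=.
rewrite !mxE /= ?(o1,o2,o3,o4) /=.
rewrite expr0 expr1; ring.
Qed.

Lemma tr2 (F : fieldType) (A : 'M[F]_2) : \tr A = A 0 0 + A 1 1.
Proof. by rewrite /mxtrace !big_ord_recl big_ord0 ?(o1,o2,o3,o4) addr0. Qed.

Lemma tr0E {F : fieldType} {a b : F} : a + b = 0 -> b = - a.
Proof. by move=> h; apply/eqP; rewrite -addr_eq0 addrC h. Qed.

Ltac mxsimp := rewrite ?mxE ?big_ord_recl ?big_ord0 ?(o1,o2,o3,o4,o5,o6,eqxx) /= ?mxE ?(o1,o2,o3,o4,o5,o6,eqxx) ?mulr1n ?mulr0n /=.

Section Gen.
Variable F : fieldType.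
Lemma sqX (X : 'M[F]_2) : \tr X = 0 -> X * X = (- \det X) *: 1.
Proof.
rewrite tr2 det2 => tX; have E := tr0E tX.
by apply/matrixP => i j; case: (ord2 i) => ->; case: (ord2 j) => ->; rewrite -mulmxE; mxsimp;
  rewrite ?E; ring.
Qed.

Lemma powX (X : 'M[F]_2) k : \tr X = 0 ->
  X ^+ k = (- \det X) ^+ k./2 *: (if odd k then X else 1).
Proof.
move=> tX; elim: k => [|k IH]; first by rewrite expr0 scale1r.
rewrite exprSr IH [k.+1./2]/= uphalf_half /=; case: (odd k) => /=.
  by rewrite -scalerAl sqX // scalerA -exprSr add1n.
by rewrite add0n -scalerAl mul1r.
Qed.

Lemma psum (X : 'M[F]_2) n : \tr X = 0 ->
  series (fun k => (k`!%:R)^-1 *: X ^+ k) n =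
  (\sum_(0 <= k < n) (k`!%:R)^-1 * (- \det X)^+k./2 * (~~ odd k)%:R) *: 1 +
  (\sum_(0 <= k < n) (k`!%:R)^-1 * (- \det X)^+k./2 * (odd k)%:R) *: X.
Proof.
move=> tX; rewrite /series /= !scaler_suml -big_split /=; apply: eq_bigr => k _.
rewrite powX //; case: (odd k) => /=; rewrite ?mulr1 ?mulr0 ?scale0r ?add0r ?addr0 scalerA //.
Qed.
End Gen.

Section An.
Variable R : realType.
Local Open Scope complex_scope.

Lemma su2_det (X : 'M[R[i]]_2) : su2 X -> exists t : R, 0 <= t /\ \det X = t%:C.
Proof.
case=> adj tX.
have E00 : (X 0 0)^* = - X 0 0.
  by have := congr1 (fun M : 'M[R[i]]_2 => M 0 0) adj; rewrite /adjmx !mxE.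
have E10 : X 1 0 = - (X 0 1)^*.
  have H := congr1 (fun M : 'M[R[i]]_2 => M 1 0) adj; rewrite /adjmx !mxE in H.
  by rewrite -[X 1 0]opprK -H.
rewrite tr2 in tX.
rewrite det2 (tr0E tX) E10.
move: E00; case: (X 0 0) => a b; case: (X 0 1) => p q.
simpc => /eqP; rewrite eq_complex /= => /andP[/eqP ha _].
have a0 : a = 0 by lra.
exists (b^+2 + p^+2 + q^+2); split; first by rewrite !addr_ge0 ?sqr_ge0.
rewrite a0; apply/eqP; rewrite eq_complex /=; apply/andP; split; apply/eqP; ring.
Qed.

Local Open Scope classical_set_scope.
Local Notation M := (matrix_matrix__canonical__normed_module_NormedModule R[i] 2 2).
Local Notation CC := (complex_complex__canonical__Num_NumField R).

Lemma cvgC (u : nat -> R) (l : R) : u @ \oo --> l ->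
  (fun n => ((u n)%:C : CC)) @ \oo --> (l%:C : CC).
Proof.
move=> H; apply/cvgrPdist_lt => e e0.
have [Ie Re0] : complex.Im e = 0 /\ 0 < complex.Re e.
  by move: e0; rewrite ltcE => /andP[/eqP h1 h2]; split.
move/cvgrPdist_lt: H => /(_ (complex.Re e) Re0); apply: filterS => n hn.
rewrite -rmorphB normc_def /= expr0n /= addr0 sqrtr_sqr ltcE /= Ie eqxx /=.
exact: hn.
Qed.

Definition aR (t : R) n := \sum_(0 <= k < n) (k`!%:R)^-1 * (-t)^+k./2 * (~~odd k)%:R.
Definition bR (t : R) n := \sum_(0 <= k < n) (k`!%:R)^-1 * (-t)^+k./2 * (odd k)%:R.

Lemma kcases (P : nat -> Prop) : (forall m, P m.*2) -> (forall m, P m.*2.+1) -> forall k, P k.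
Proof.
move=> h0 h1 k; rewrite -[k]odd_double_half; case: (odd k) => /=.
  by rewrite add1n; apply: h1.
by rewrite add0n; apply: h0.
Qed.

Lemma aR_cos t : 0 <= t -> aR t = series (cos_coeff (Num.sqrt t)).
Proof.
move=> t0; apply/funext => n; rewrite /aR /series /=; apply: eq_bigr => k _.
move: k; apply: kcases => m.
  rewrite /cos_coeff /= odd_double /= doubleK -mul2n exprM sqr_sqrtr // exprNn -exprnP; ring.
by rewrite /cos_coeff /= odd_double /= !mulr0 !mul0r.
Qed.

Lemma bR_sin t n : 0 <= t -> Num.sqrt t * bR t n = series (sin_coeff (Num.sqrt t)) n.
Proof.
move=> t0; rewrite /bR /series /= mulr_sumr; apply: eq_bigr => k _.
move: k; apply: kcases => m.
  by rewrite /sin_coeff /= odd_double /= !mulr0 !mul0r.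
rewrite /sin_coeff /= odd_double /= uphalf_double doubleK exprS -mul2n exprM sqr_sqrtr // exprNn [(- t) ^+ _]exprNn expr1n; ring.
Qed.

Lemma expmx_lim (X : 'M[R[i]]_2) (L : M) :
  (fun n => (series (fun k => (k`!%:R)^-1 *: X ^+ k) n : M)) @ \oo --> L -> expmx X = L.
Proof. move=> H; rewrite /expmx; exact: (norm_cvg_lim H). Qed.

Lemma bR0 n : bR 0 (n + 2) = 1.
Proof.
rewrite /bR addn2 !big_nat_recl //= big1 ?addr0.
  by rewrite /= !expr0 !mulr1 mulr0 add0r invr1.
by move=> i _; rewrite /= oppr0 expr0n /= mulr0 mul0r.
Qed.

Lemma expmx_su2 (X : 'M[R[i]]_2) : su2 X ->
  exists c s : R[i], expmx X = c%:M + s *: X /\ c^+2 + s^+2 * \det X = 1.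
Proof.
move=> hX; have [t [t0 dX]] := su2_det X hX; have tX : \tr X = 0 by case: hX.
set th := Num.sqrt t.
have ha : aR t @ \oo --> cos th.
  by rewrite aR_cos // cos.unlock; exact: is_cvg_series_cos_coeff.
have [s hb hs] : exists2 s : R, bR t @ \oo --> s & (cos th)^+2 + s^+2 * t = 1.
  have [th0|th0] := eqVneq th 0.
    have t00 : t = 0.
      by apply/le_anti; rewrite t0 andbT -sqrtr_eq0; apply/eqP.
    exists 1.
      rewrite -(cvg_shiftn 2) t00.
      have -> : [sequence bR 0 (n + 2)]_n = fun _ => 1 by apply/funext => n; rewrite /= bR0.
      exact: cvg_cst.
    by rewrite th0 cos0 t00 mulr0 addr0 expr1n.
  exists (th^-1 * sin th).
    have -> : bR t = fun n => th^-1 * series (sin_coeff th) n.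
      by apply/funext => n; rewrite -bR_sin // mulKf.
    by apply: cvgMr; rewrite sin.unlock; exact: is_cvg_series_sin_coeff.
  rewrite -[t]sqr_sqrtr // -/th.
  have -> : th^-1 * sin th = sin th / th by rewrite mulrC.
  by rewrite -[RHS](cos2Dsin2 th); congr (_ + _); field.
have E : expmx X = ((cos th)%:C : CC) *: (1%:M : M) + (s%:C : CC) *: (X : M).
  apply: expmx_lim.
  have -> : (fun n => (series (fun k => (k`!%:R)^-1 *: X ^+ k) n : M)) =
     fun n => ((aR t n)%:C : CC) *: (1 : M) + ((bR t n)%:C : CC) *: (X : M).
    apply/funext => n; rewrite psum // dX; congr (_ *: _ + _ *: _);
    rewrite /aR /bR rmorph_sum; apply: eq_bigr => k _;
    rewrite !rmorphM ?rmorph_nat ?fmorphV ?rmorph_nat ?rmorphXn ?rmorphN //.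
  by apply: cvgD; apply: cvgZl; apply: cvgC.
exists (real_complex R (cos th)); exists (real_complex R s); split.
  by rewrite E; congr (_ + _); exact: scalemx1.
by rewrite dX -!rmorphXn -rmorphM -rmorphD hs.
Qed.
End An.

Section Fin.
Variable F : fieldType.
Lemma final (A B : 'M[F]_2) cA sA cB sB :
 \tr A = 0 -> \tr B = 0 -> \tr (A *m B) = 0 ->
 cA^+2 + sA^+2 * \det A = 1 -> cB^+2 + sB^+2 * \det B = 1 ->
 let g := cA%:M + sA *: A in let h := cB%:M + sB *: B in
 g *m h = h *m g + invmx h *m g + h *m invmx g - (\tr (h *m g))%:M.
Proof.
move=> tA tB tAB dA dB g h.
have inv : forall (c s : F) (X : 'M[F]_2), \tr X = 0 -> c^+2 + s^+2 * \det X = 1 ->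
   invmx (c%:M + s *: X) = c%:M - s *: X.
  move=> c s X tX dX.
  have E : (c%:M + s *: X) *m (c%:M - s *: X) = 1%:M.
    rewrite tr2 in tX; rewrite det2 in dX.
    by apply/matrixP => i j; case: (ord2 i) => ->; case: (ord2 j) => ->; mxsimp;
      try rewrite -dX; rewrite (tr0E tX); ring.
  have [U _] := mulmx1_unit E.
  by rewrite -[RHS](mulKmx U) E mulmx1.
rewrite /g /h !inv //.
rewrite tr2 in tA; rewrite tr2 in tB; rewrite tr2 !mxE in tAB.
rewrite !big_ord_recl !big_ord0 ?(o1,o2,o3,o4) in tAB.
have EA := tr0E tA.
have EB := tr0E tB.
rewrite EA EB in tAB.
move: tAB; set t := (X in X = 0) => t0.
have key : forall P Q : F, P - Q = 2 * sA * sB * t -> P = Q.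
  by move=> P Q H; apply/eqP; rewrite -subr_eq0 H t0 mulr0.
apply/matrixP => i j; case: (ord2 i) => ->; case: (ord2 j) => ->; mxsimp;
  rewrite ?tr2; mxsimp; rewrite ?EA ?EB; first [ring | (apply: key; rewrite /t; ring)].
Qed.
End Fin.

Theorem lemma1 (R : realType) (A B : 'M[R[i]]_2) :
  su2 A -> su2 B -> \tr (A *m B) = 0 ->
  let g := expmx A in
  let h := expmx B in
  g *m h = h *m g + invmx h *m g + h *m invmx g - (\tr (h *m g))%:M.
Proof.
move=> hA hB tAB g h.
have [cA [sA [EA dA]]] := @expmx_su2 R A hA.
have [cB [sB [EB dB]]] := @expmx_su2 R B hB.
rewrite /g /h EA EB.
apply: final => //; [by case: hA | by case: hB].
Qed.
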